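(* Let $(X,\rho)$ and $(\tilde X,\tilde\rho)$ be symmetric racks (respectively, symmetric quandles) and let $f:(\tilde X,\tilde\rho)\to(X,\rho)$ be a surjective symmetric rack (respectively, quandle) homomorphism. Let $S=\{S_x\mid x\in X\}$ be a family of sets such that for each $x\in X$ there is a bijection $\mu_x:f^{-1}(x)\to S_x$. Then there is a dynamical cocycle $(\alpha,\beta)$ of $(X,\rho)$ over $S$ such that $(\tilde X,\tilde\rho)$ is isomorphic (as a symmetric rack, respectively quandle) to $\big(X\times_{(\alpha,\beta)}S,\rho_{\alpha,\beta}\big)$.
   Context: A rack is a set $X$ with binary operation $*$ such that each $x\mapsto x*y$ is bijective (inverse $x\mapsto x*^{-1}y$) and $(x*y)*z=(x*z)*(y*z)$; a quandle also satisfies $x*x=x$. A good involution is $\rho:X\to X$ with $\rho^2=\mathrm{id}$, $\rho(x*y)=\rho(x)*y$, $x*\rho(y)=x*^{-1}y$; $(X,\rho)$ is a symmetric rack (quandle). A symmetric rack (quandle) homomorphism $f$ satisfies $f(x*y)=f(x)*f(y)$ and $f\rho=\rho' f$; an isomorphism is a bijective one. A dynamical cocycle of $(X,\rho)$ over $S=\{S_x\}$ consists of maps $\alpha_{x,y}:S_x\times S_y\to S_{x*y}$ and $\beta_x:S_x\to S_{\rho(x)}$ such that for all $x,y,z\in X$, $s\in S_x,t\in S_y,w\in S_z$ (with $\alpha_{x,y}(t)(s):=\alpha_{x,y}(s,t)$): (1) $\alpha_{x,y}(t):S_x\to S_{x*y}$ is bijective; (2) $\alpha_{x*y,z}(\alpha_{x,y}(s,t),w)=\alpha_{x*z,y*z}(\alpha_{x,z}(s,w),\alpha_{y,z}(t,w))$;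 (3) $\alpha_{\rho(x),y}(\beta_x(s),t)=\beta_{x*y}(\alpha_{x,y}(s,t))$; (4) $\beta_{\rho(x)}\beta_x(s)=s$; (5) $\alpha_{x,\rho(y)}(\beta_y(t))(s)=(\alpha_{x*^{-1}y,y}(t))^{-1}(s)$; for symmetric quandles also (6) $\alpha_{x,x}(s,s)=s$. The extension $\big(X\times_{(\alpha,\beta)}S,\rho_{\alpha,\beta}\big)$ is the set $\{(x,s)\mid x\in X,s\in S_x\}$ with $(x,s)*(y,t)=(x*y,\alpha_{x,y}(s,t))$ and $\rho_{\alpha,\beta}(x,s)=(\rho(x),\beta_x(s))$, which is a symmetric rack (quandle). *)

(* Defs.v *)
From mathcomp Require Export ssreflect ssrfun.
Set Implicit Arguments.
Unset Strict Implicit.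

(* A rack (X, op) presented with its inverse operation opinv:
   x |-> op x y is bijective with inverse x |-> opinv x y,
   and right self-distributivity holds. *)
Definition is_rack (X : Type) (op opinv : X -> X -> X) : Prop :=
  (forall x y, op (opinv x y) y = x) /\
  (forall x y, opinv (op x y) y = x) /\
  (forall x y z, op (op x y) z = op (op x z) (op y z)).

Definition is_quandle (X : Type) (op : X -> X -> X) : Prop :=
  forall x, op x x = x.

Definition good_involution (X : Type) (op opinv : X -> X -> X) (rho : X -> X) : Prop :=
  (forall x, rho (rho x) = x) /\
  (forall x y, rho (op x y) = op (rho x) y) /\
  (forall x y, op x (rho y) = opinv x y).

Definition is_symrack (q : bool) (X : Type) (op opinv : X -> X -> X) (rho : X -> X) : Prop :=
  is_rack op opinv /\ good_involution op opinv rho /\ (q = true -> is_quandle op).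

Definition sym_hom (Xt X : Type) (opt : Xt -> Xt -> Xt) (rhot : Xt -> Xt)
  (op : X -> X -> X) (rho : X -> X) (f : Xt -> X) : Prop :=
  (forall a b, f (opt a b) = op (f a) (f b)) /\ (forall a, f (rhot a) = rho (f a)).

Definition sym_iso (Xt X : Type) (opt : Xt -> Xt -> Xt) (rhot : Xt -> Xt)
  (op : X -> X -> X) (rho : X -> X) (f : Xt -> X) : Prop :=
  sym_hom opt rhot op rho f /\ bijective f.

(* Dynamical cocycle.  Equalities between elements of fibres S a and S b
   with a = b only propositionally are stated as equalities of dependent
   pairs in {x : X & S x} (heterogeneous equality). *)
Definition dyn_cocycle (q : bool) (X : Type) (op opinv : X -> X -> X) (rho : X -> X)
  (S : X -> Type) (alpha : forall x y, S x -> S y -> S (op x y))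
  (beta : forall x, S x -> S (rho x)) : Prop :=
  (forall x y (t : S y), bijective (fun s : S x => alpha x y s t)) /\
  (forall x y z (s : S x) (t : S y) (w : S z),
      existT S (op (op x y) z) (alpha _ _ (alpha x y s t) w)
      = existT S (op (op x z) (op y z)) (alpha _ _ (alpha x z s w) (alpha y z t w))) /\
  (forall x y (s : S x) (t : S y),
      existT S (op (rho x) y) (alpha _ _ (beta x s) t)
      = existT S (rho (op x y)) (beta _ (alpha x y s t))) /\
  (forall x (s : S x), existT S (rho (rho x)) (beta _ (beta x s)) = existT S x s) /\
  (* (5): alpha_{x,rho y}(beta_y t)(s) equals (alpha_{x*^{-1}y,y}(t))^{-1}(s),
     i.e. equals the element u of S_{x*^{-1}y} mapped to s by alpha_{x*^{-1}y,y}(t). *)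
  (forall x y (s : S x) (t : S y) (u : S (opinv x y)),
      existT S (op (opinv x y) y) (alpha _ _ u t) = existT S x s ->
      existT S (op x (rho y)) (alpha x (rho y) s (beta y t)) = existT S (opinv x y) u) /\
  (q = true -> forall x (s : S x), existT S (op x x) (alpha x x s s) = existT S x s).

Definition ext_op (X : Type) (op : X -> X -> X) (S : X -> Type)
  (alpha : forall x y, S x -> S y -> S (op x y))
  (a b : {x : X & S x}) : {x : X & S x} :=
  existT S (op (projT1 a) (projT1 b)) (alpha _ _ (projT2 a) (projT2 b)).

Definition ext_rho (X : Type) (rho : X -> X) (S : X -> Type)
  (beta : forall x, S x -> S (rho x)) (a : {x : X & S x}) : {x : X & S x} :=
  existT S (rho (projT1 a)) (beta _ (projT2 a)).

(* Main.v *)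
Require Import Defs.
From Stdlib Require Import ProofIrrelevance IndefiniteDescription.

Theorem proposition5p1 (q : bool)
  (X : Type) (op opinv : X -> X -> X) (rho : X -> X)
  (Xt : Type) (opt opinvt : Xt -> Xt -> Xt) (rhot : Xt -> Xt)
  (f : Xt -> X) (S : X -> Type) (mu : forall x, {a : Xt | f a = x} -> S x) :
  is_symrack q op opinv rho ->
  is_symrack q opt opinvt rhot ->
  sym_hom opt rhot op rho f ->
  (forall x, exists a, f a = x) ->
  (forall x, bijective (mu x)) ->
  exists (alpha : forall x y, S x -> S y -> S (op x y))
         (beta : forall x, S x -> S (rho x)),
    @dyn_cocycle q X op opinv rho S alpha beta /\
    exists g : Xt -> {x : X & S x},
      sym_iso opt rhot (@ext_op X op S alpha) (@ext_rho X rho S beta) g.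
Proof.
move=> [[Rr1 [Rr2 Rr3]] [[Gr1 [Gr2 Gr3]] Qr]] [[Rt1 [Rt2 Rt3]] [[Gt1 [Gt2 Gt3]] Qt]] [fop frho] _ mubij.
have minv : forall x, {g : S x -> {a : Xt | f a = x} | cancel (mu x) g /\ cancel g (mu x)}.
  move=> x; apply: constructive_indefinite_description.
  case: (mubij x) => g c1 c2; exists g; by split.
pose hv x (s : S x) : Xt := proj1_sig (sval (minv x) s).
have hvP : forall x s, f (hv x s) = x := fun x s => proj2_sig (sval (minv x) s).
have mu_irr : forall x (p p' : {a | f a = x}), proj1_sig p = proj1_sig p' -> mu x p = mu x p'.
  move=> x [a e] [a' e'] /= E; subst a'; by rewrite (proof_irrelevance _ e e').
have hv_mu : forall x p, hv x (mu x p) = proj1_sig p.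
  by move=> x p; rewrite /hv (proj1 (svalP (minv x))).
have hv_inj : forall x s s', hv x s = hv x s' -> s = s'.
  move=> x s s' E.
  rewrite -[s](proj2 (svalP (minv x))) -[s'](proj2 (svalP (minv x))).
  exact: mu_irr.
have Gfib : forall x (p : {a | f a = x}),
    existT S (f (proj1_sig p)) (mu _ (exist _ (proj1_sig p) erefl)) = existT S x (mu x p).
  move=> x [a e] /=; by subst x.
have Gfib2 : forall x s, existT S (f (hv x s)) (mu _ (exist _ (hv x s) erefl)) = existT S x s.
  move=> x s; rewrite /hv Gfib; by rewrite (proj2 (svalP (minv x))).
clearbody hv.
have fopinv : forall a b, f (opinvt a b) = opinv (f a) (f b).
  by move=> a b; rewrite -{2}(Rt1 a b) fop Rr2.
have hvop : forall x y s t, f (opt (hv x s) (hv y t)) = op x y.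
  by move=> x y s t; rewrite fop !hvP.
have hvrho : forall x s, f (rhot (hv x s)) = rho x.
  by move=> x s; rewrite frho hvP.
pose alpha x y (s : S x) (t : S y) : S (op x y) :=
  mu (op x y) (exist _ (opt (hv x s) (hv y t)) (hvop x y s t)).
pose beta x (s : S x) : S (rho x) := mu (rho x) (exist _ (rhot (hv x s)) (hvrho x s)).
have alpha_hv : forall x y s t, hv _ (alpha x y s t) = opt (hv x s) (hv y t).
  by move=> x y s t; rewrite /alpha hv_mu.
have beta_hv : forall x s, hv _ (beta x s) = rhot (hv x s).
  by move=> x s; rewrite /beta hv_mu.
have alpha_inv : forall x y (t : S y), bijective (fun s : S x => alpha x y s t).
  move=> x y t.
  have pf : forall s', f (opinvt (hv (op x y) s') (hv y t)) = x.
    by move=> s'; rewrite fopinv !hvP Rr2.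
  exists (fun s' => mu x (exist _ (opinvt (hv _ s') (hv y t)) (pf s'))).
  - move=> s; apply: hv_inj; by rewrite hv_mu /= alpha_hv Rt2.
  - move=> s'; apply: hv_inj; by rewrite alpha_hv hv_mu /= Rt1.
clearbody alpha beta.
pose H (u : {x : X & S x}) := hv (projT1 u) (projT2 u).
pose G (a : Xt) : {x : X & S x} := existT S (f a) (mu _ (exist _ a erefl)).
have HG : forall a, H (G a) = a by move=> a; rewrite /H /G /= hv_mu.
have GH : forall u, G (H u) = u by move=> [x s]; rewrite /H /G /= Gfib2.
have H_inj : forall u v, H u = H v -> u = v.
  by move=> u v E; rewrite -(GH u) -(GH v) E.
have H_def : forall x s, H (existT S x s) = hv x s by [].
have Hop : forall u v, H (ext_op alpha u v) = opt (H u) (H v).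
  by move=> [x s] [y t]; rewrite /ext_op /= H_def alpha_hv.
have Hrho : forall u, H (ext_rho beta u) = rhot (H u).
  by move=> [x s]; rewrite /ext_rho /= H_def beta_hv.
clearbody H G.
exists alpha, beta; split.
  split; first exact: alpha_inv.
  split.
    by move=> x y z s t w; apply: H_inj; rewrite !H_def !alpha_hv Rt3.
  split.
    by move=> x y s t; apply: H_inj; rewrite !H_def alpha_hv !beta_hv alpha_hv Gt2.
  split.
    by move=> x s; apply: H_inj; rewrite !H_def !beta_hv Gt1.
  split.
    move=> x y s t u /(f_equal H); rewrite !H_def !alpha_hv => E.
    by apply: H_inj; rewrite !H_def alpha_hv beta_hv Gt3 -E Rt2.
  by move=> qt x s; apply: H_inj; rewrite !H_def alpha_hv Qt.
exists G; split; first split.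
- by move=> a b; apply: H_inj; rewrite Hop !HG.
- by move=> a; apply: H_inj; rewrite Hrho !HG.
- by exists H.
Qed.
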